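(* Let $X$ be a Baire space, $Y$ a first countable topological space, $(Z,d)$ a metric space and $f:X\times Y\to Z$ a mapping. Suppose that for each $x\in X$, $f_x$ is continuous and $f^y$ is quasicontinuous at $x$ for every $y$ in a dense set $D_x\subset Y$. Then for each $y\in Y$ there is a residual set $R_y\subset X$ such that $f$ is continuous at every point of $R_y\times\{y\}$.
   Context: $f_x(y)=f^y(x)=f(x,y)$. A mapping $g:X\to Z$ is quasicontinuous at $a$ if for each neighborhood $U$ of $a$ and each neighborhood $W$ of $g(a)$ there is an open $O$ with $\emptyset\ne O\subset U$ and $g(O)\subset W$. Residual means containing a countable intersection of dense open sets. *)

(* Defs.v *)
From Stdlib Require Import Reals.
From Stdlib Require Import Lra.
Open Scope R_scope.

Definition set (T : Type) := T -> Prop.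
Definition subset {T} (A B : set T) := forall x, A x -> B x.

Record topology (T : Type) := Topology {
  open : set T -> Prop;
  open_full : open (fun _ => True);
  open_inter : forall A B, open A -> open B -> open (fun x => A x /\ B x);
  open_union : forall (I : Type) (F : I -> set T),
      (forall i, open (F i)) -> open (fun x => exists i, F i x)
}.
Arguments open {T} t A.

Definition nbhd {T} (t : topology T) (a : T) (N : set T) :=
  exists O, open t O /\ O a /\ subset O N.

Definition dense {T} (t : topology T) (S : set T) :=
  forall O, open t O -> (exists x, O x) -> exists x, O x /\ S x.

Definition baire_space {T} (t : topology T) :=
  forall G : nat -> set T, (forall n, open t (G n) /\ dense t (G n)) ->
    dense t (fun x => forall n, G n x).

Definition first_countable {T} (t : topology T) :=
  forall y, exists B : nat -> set T,
    (forall n, open t (B n) /\ B n y) /\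
    (forall U, open t U -> U y -> exists n, subset (B n) U).

Definition residual {T} (t : topology T) (R : set T) :=
  exists G : nat -> set T, (forall n, open t (G n) /\ dense t (G n)) /\
    (forall x, (forall n, G n x) -> R x).

Definition continuous_at {S T} (s : topology S) (t : topology T) (g : S -> T) (a : S) :=
  forall W, nbhd t (g a) W -> exists U, nbhd s a U /\ forall x, U x -> W (g x).

Definition continuous {S T} (s : topology S) (t : topology T) (g : S -> T) :=
  forall a, continuous_at s t g a.

Definition quasicontinuous_at {S T} (s : topology S) (t : topology T) (g : S -> T) (a : S) :=
  forall U W, nbhd s a U -> nbhd t (g a) W ->
    exists O, open s O /\ (exists x, O x) /\ subset O U /\ (forall x, O x -> W (g x)).

Record metric (Z : Type) := Metric {
  dist : Z -> Z -> R;
  dist_ge0 : forall x y, 0 <= dist x y;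
  dist_eq0 : forall x y, dist x y = 0 <-> x = y;
  dist_sym : forall x y, dist x y = dist y x;
  dist_tri : forall x y z, dist x z <= dist x y + dist y z
}.
Arguments dist {Z} m _ _.

Definition metric_open {Z} (d : metric Z) (W : set Z) :=
  forall z, W z -> exists eps, 0 < eps /\ forall w, dist d z w < eps -> W w.

Lemma metric_open_full {Z} (d : metric Z) : metric_open d (fun _ => True).
Proof. intros z _; exists 1; split; [lra|auto]. Qed.

Lemma metric_open_inter {Z} (d : metric Z) A B :
  metric_open d A -> metric_open d B -> metric_open d (fun x => A x /\ B x).
Proof.
  intros HA HB z [Az Bz].
  destruct (HA z Az) as [e1 [He1 H1]]; destruct (HB z Bz) as [e2 [He2 H2]].
  exists (Rmin e1 e2); split; [apply Rmin_pos; auto|].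
  intros w Hw; split; [apply H1|apply H2];
    eapply Rlt_le_trans; eauto; [apply Rmin_l|apply Rmin_r].
Qed.

Lemma metric_open_union {Z} (d : metric Z) (I : Type) (F : I -> set Z) :
  (forall i, metric_open d (F i)) -> metric_open d (fun x => exists i, F i x).
Proof.
  intros HF z [i Hi]; destruct (HF i z Hi) as [e [He H]].
  exists e; split; auto; intros w Hw; exists i; auto.
Qed.

Definition metric_topology {Z} (d : metric Z) : topology Z :=
  @Topology Z (metric_open d) (metric_open_full d) (@metric_open_inter Z d)
    (@metric_open_union Z d).

Definition prod_open {X Y} (tx : topology X) (ty : topology Y) (W : set (X * Y)) :=
  forall p, W p -> exists U V, open tx U /\ open ty V /\ U (fst p) /\ V (snd p) /\
    forall q, U (fst q) -> V (snd q) -> W q.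

Lemma prod_open_full {X Y} (tx : topology X) (ty : topology Y) :
  prod_open tx ty (fun _ => True).
Proof.
  intros p _; exists (fun _ => True), (fun _ => True);
  repeat split; auto using open_full.
Qed.

Lemma prod_open_inter {X Y} (tx : topology X) (ty : topology Y) A B :
  prod_open tx ty A -> prod_open tx ty B -> prod_open tx ty (fun x => A x /\ B x).
Proof.
  intros HA HB p [Ap Bp].
  destruct (HA p Ap) as [U1 [V1 [a1 [b1 [c1 [e1 H1]]]]]].
  destruct (HB p Bp) as [U2 [V2 [a2 [b2 [c2 [e2 H2]]]]]].
  exists (fun x => U1 x /\ U2 x), (fun y => V1 y /\ V2 y).
  repeat split; auto using open_inter; [apply H1|apply H2]; tauto.
Qed.

Lemma prod_open_union {X Y} (tx : topology X) (ty : topology Y) (I : Type) F :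
  (forall i : I, prod_open tx ty (F i)) -> prod_open tx ty (fun x => exists i, F i x).
Proof.
  intros HF p [i Hi]; destruct (HF i p Hi) as [U [V [? [? [? [? H]]]]]].
  exists U, V; repeat split; auto; intros q Hq1 Hq2; exists i; auto.
Qed.

Definition prod_topology {X Y} (tx : topology X) (ty : topology Y) : topology (X * Y) :=
  @Topology (X * Y) (prod_open tx ty) (prod_open_full tx ty) (@prod_open_inter X Y tx ty)
    (@prod_open_union X Y tx ty).

(* Main.v *)
Require Import Defs.
From Stdlib Require Import Reals Lra Classical.
Open Scope R_scope.

Lemma ball_open {Z} (d : metric Z) c r : metric_open d (fun w => Defs.dist d c w < r).
Proof.
  intros z Hz. exists (r - Defs.dist d c z). split; [lra|].
  intros w Hw. pose proof (Defs.dist_tri _ d c z w). lra.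
Qed.

Lemma ball_nbhd {Z} (d : metric Z) c r : 0 < r ->
  nbhd (metric_topology d) c (fun w => Defs.dist d c w < r).
Proof.
  intros Hr. exists (fun w => Defs.dist d c w < r). split; [exact (ball_open d c r)|].
  split.
  - rewrite (proj2 (Defs.dist_eq0 _ d c c) eq_refl); lra.
  - intros w H0; exact H0.
Qed.

Lemma dense_step X Y Z (tX: topology X) (tY: topology Y) (d: metric Z)
  (f: X*Y -> Z) (y:Y) (B: nat -> set Y) (e: R) :
  baire_space tX ->
  (forall n, open tY (B n) /\ B n y) ->
  (forall U, open tY U -> U y -> exists n, subset (B n) U) ->
  (forall x, continuous tY (metric_topology d) (fun y => f (x,y)) /\
     exists Dx, dense tY Dx /\ forall y, Dx y ->
       quasicontinuous_at tX (metric_topology d) (fun x' => f (x',y)) x) ->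
  0 < e ->
  forall W, open tX W -> (exists x, W x) ->
  exists O n c, open tX O /\ (exists x, O x) /\ subset O W /\
    forall x1 y1, O x1 -> B n y1 -> Defs.dist d (f (x1,y1)) c < 7*e.
Proof.
  intros HB HBo HBb Hf He W HW [w Hw].
  set (F := fun n x => W x /\ forall y', B n y' -> Defs.dist d (f (x,y)) (f (x,y')) < e).
  assert (Fcov: forall x, W x -> exists n, F n x).
  { intros x Hx. destruct (Hf x) as [Hc _].
    destruct (Hc y (fun z => Defs.dist d (f(x,y)) z < e) (ball_nbhd d _ _ He))
      as [U [[O [HO [Oy HOU]]] HU]].
    destruct (HBb O HO Oy) as [n Hn]. exists n. split; [exact Hx|].
    intros y' Hy'. apply (HU y'). apply HOU, Hn, Hy'. }
  set (Ext := fun n x => exists i : {O : set X | open tX O /\ forall z, O z -> ~ F n z},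
        proj1_sig i x).
  assert (HExto: forall n, open tX (Ext n)).
  { intro n. exact (open_union _ tX _ (fun i : {O : set X | open tX O /\ forall z, O z -> ~ F n z} => proj1_sig i) (fun i => proj1 (proj2_sig i))). }
  assert (Hnd: exists n, ~ dense tX (Ext n)).
  { apply NNPP; intro Hall.
    assert (Hd: forall n, dense tX (Ext n)).
    { intro n. apply NNPP. intro Hn. apply Hall. exists n; exact Hn. }
    destruct (HB Ext (fun n => conj (HExto n) (Hd n)) W HW (ex_intro _ w Hw)) as [x [Wx Hx]].
    destruct (Fcov x Wx) as [m Hm]. destruct (Hx m) as [[O [HO HOF]] Ox].
    exact (HOF x Ox Hm). }
  destruct Hnd as [n Hn].
  assert (HV: exists V, open tX V /\ (exists x, V x) /\ forall x, V x -> ~ Ext n x).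
  { apply NNPP; intro H. apply Hn. intros V HV HVne. apply NNPP; intro H2.
    apply H. exists V. split; auto. split; auto. intros x Vx Ex. apply H2. exists x; auto. }
  destruct HV as [V [HV [[v Vv] HVE]]].
  assert (Fdense: forall O, open tX O -> subset O V -> (exists x, O x) -> exists z, O z /\ F n z).
  { intros O HO HOV [o Oo]. apply NNPP; intro H. apply (HVE o (HOV o Oo)).
    exists (exist _ O (conj HO (fun z Oz Fz => H (ex_intro _ z (conj Oz Fz))))). exact Oo. }
  destruct (Fdense V HV (fun x h => h) (ex_intro _ v Vv)) as [x0 [Vx0 Fx0]].
  destruct (Hf x0) as [_ [D0 [HD0 Hq0]]].
  destruct (HD0 (B n) (proj1 (HBo n)) (ex_intro _ y (proj2 (HBo n)))) as [y0 [By0 Dy0]].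
  set (VW := fun x => V x /\ W x).
  assert (HVW: open tX VW) by (apply open_inter; auto).
  assert (NVW: nbhd tX x0 VW).
  { exists VW. split; [exact HVW|]. split; [split; [exact Vx0| exact (proj1 Fx0)]|].
    intros z h; exact h. }
  destruct (Hq0 y0 Dy0 VW (fun z => Defs.dist d (f(x0,y0)) z < e) NVW (ball_nbhd d _ _ He))
    as [O [HO [One [HOVW HOb]]]].
  exists O, n, (f(x0,y)). split; auto. split; auto. split.
  { intros z Oz; exact (proj2 (HOVW z Oz)). }
  intros x1 y1 Ox1 By1.
  destruct (Hf x1) as [Hc1 [D1 [HD1 Hq1]]].
  destruct (Hc1 y1 _ (ball_nbhd d (f(x1,y1)) e He)) as [U1 [[O1 [HO1 [O1y1 HO1U1]]] HU1]].
  destruct (HD1 (fun z => O1 z /\ B n z) (open_inter _ _ _ _ HO1 (proj1 (HBo n)))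
              (ex_intro _ y1 (conj O1y1 By1))) as [y2 [[O1y2 By2] Dy2]].
  assert (d12: Defs.dist d (f(x1,y1)) (f(x1,y2)) < e) by exact (HU1 y2 (HO1U1 y2 O1y2)).
  assert (NO: nbhd tX x1 O).
  { exists O. split; [exact HO|]. split; [exact Ox1|]. intros z h; exact h. }
  destruct (Hq1 y2 Dy2 O (fun z => Defs.dist d (f(x1,y2)) z < e) NO (ball_nbhd d _ _ He))
    as [O2 [HO2 [O2ne [HO2O HO2b]]]].
  destruct (Fdense O2 HO2 (fun z h => proj1 (HOVW z (HO2O z h))) O2ne) as [x2 [O2x2 [_ Fx2]]].
  pose proof (HO2b x2 O2x2) as d2. simpl in d2.
  pose proof (Fx2 y2 By2) as d3.
  pose proof (Fx2 y0 By0) as d4.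
  pose proof (HOb x2 (HO2O x2 O2x2)) as d5. simpl in d5.
  pose proof (proj2 Fx0 y0 By0) as d6.
  pose proof (Defs.dist_tri _ d (f(x1,y1)) (f(x1,y2)) (f(x0,y))).
  pose proof (Defs.dist_tri _ d (f(x1,y2)) (f(x2,y2)) (f(x0,y))).
  pose proof (Defs.dist_tri _ d (f(x2,y2)) (f(x2,y)) (f(x0,y))).
  pose proof (Defs.dist_tri _ d (f(x2,y)) (f(x2,y0)) (f(x0,y))).
  pose proof (Defs.dist_tri _ d (f(x2,y0)) (f(x0,y0)) (f(x0,y))).
  pose proof (Defs.dist_sym _ d (f(x2,y2)) (f(x2,y))).
  pose proof (Defs.dist_sym _ d (f(x2,y0)) (f(x0,y0))).
  pose proof (Defs.dist_sym _ d (f(x0,y0)) (f(x0,y))).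
  lra.
Qed.

Theorem theorem4p1 (X Y Z : Type) (tX : topology X) (tY : topology Y) (d : metric Z)
  (f : X * Y -> Z) :
  baire_space tX ->
  first_countable tY ->
  (forall x : X,
     continuous tY (metric_topology d) (fun y => f (x, y)) /\
     exists Dx : set Y, dense tY Dx /\
       forall y, Dx y -> quasicontinuous_at tX (metric_topology d) (fun x' => f (x', y)) x) ->
  forall y : Y, exists Ry : set X, residual tX Ry /\
    forall x, Ry x -> continuous_at (prod_topology tX tY) (metric_topology d) f (x, y).
Proof.
  intros HB HFC Hf y.
  destruct (HFC y) as [B [HBo HBb]].
  set (P := fun k (t : set X * nat * Z) => open tX (fst (fst t)) /\
        forall x1 y1, fst (fst t) x1 -> B (snd (fst t)) y1 ->
          Defs.dist d (f (x1,y1)) (snd t) < / (INR k + 1)).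
  set (G := fun k x => exists i : {t | P k t}, fst (fst (proj1_sig i)) x).
  exists (fun x => forall k, G k x). split.
  - exists G. split; [|auto]. intro k. split.
    + exact (open_union _ tX _ (fun i : {t | P k t} => fst (fst (proj1_sig i)))
               (fun i => proj1 (proj2_sig i))).
    + intros W HW Wne.
      assert (Hek: 0 < / (INR k + 1) / 7).
      { pose proof (pos_INR k). apply Rdiv_lt_0_compat; [|lra]. apply Rinv_0_lt_compat; lra. }
      destruct (dense_step X Y Z tX tY d f y B _ HB HBo HBb Hf Hek W HW Wne)
        as [O [n [c [HO [[x Ox] [HOW Hb]]]]]].
      exists x. split; [apply HOW; auto|].
      assert (Pk : P k (O,n,c)).
      { split; [exact HO|]. intros x1 y1 h1 h2. simpl in *.
        specialize (Hb x1 y1 h1 h2). lra. }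
      exists (exist _ (O,n,c) Pk). simpl. exact Ox.
  - intros x Hx W [OW [HOW [OWf HOWW]]].
    destruct (HOW _ OWf) as [e0 [He0 Hball]].
    destruct (archimed_cor1 (e0/2)) as [N [HN HN0]]; [lra|].
    assert (HN1: / (INR N + 1) < / INR N).
    { apply lt_INR in HN0. simpl in HN0. apply Rinv_lt_contravar; [nra|lra]. }
    destruct (Hx N) as [[[[O n] c] [HO Hb]] Ox]. simpl in *.
    exists (fun p => O (fst p) /\ B n (snd p)). split.
    + exists (fun p => O (fst p) /\ B n (snd p)). split.
      { intros p [h1 h2]. exists O, (B n). repeat split; auto; apply HBo. }
      split; [split; simpl; [exact Ox| apply HBo]|]. intros p h; exact h.
    + intros [x1 y1] [h1 h2]. apply HOWW, Hball. simpl in *.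
      pose proof (Hb x1 y1 h1 h2). pose proof (Hb x y Ox (proj2 (HBo n))).
      pose proof (Defs.dist_tri _ d (f (x,y)) c (f (x1,y1))).
      pose proof (Defs.dist_sym _ d c (f (x1,y1))). lra.
Qed.
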